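(* Let $\beta$ be a Pisot number. There exists $N_0=N_0(\beta)\in\mathbb{N}$ such that for every sequence $x_1,x_2,\dots$ of finite words in $X_\beta$ and every $N>N_0$, the infinite concatenation $0^Nx_10^Nx_20^N\cdots$ belongs to $X_\beta$.
   Context: Let $B=\lceil\beta\rceil$ and $T_\beta(x)=\beta x\bmod1$. For $x\in[0,1)$ its greedy $\beta$-expansion is the digit sequence $d_k=\lfloor\beta T_\beta^{k-1}x\rfloor\in\{0,\dots,B-1\}$, $k\ge1$. The $\beta$-shift $X_\beta\subseteq\{0,\dots,B-1\}^{\mathbb{N}}$ is the closure (in the product topology) of the set of greedy $\beta$-expansions of points of $[0,1)$; it is shift-invariant. A finite word is in $X_\beta$ if some element of $X_\beta$ begins with it. $0^N$ denotes the word of $N$ zeros. A Pisot number is an algebraic integer $\beta>1$ whose conjugates have modulus $<1$ (integers $\ge2$ included). *)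

(* Defs.v *)
From HB Require Import structures.
From mathcomp Require Import all_boot all_order all_algebra.
From mathcomp Require Import reals.
From mathcomp Require Import complex.
Set Implicit Arguments. Unset Strict Implicit. Unset Printing Implicit Defensive.
Import Order.TTheory GRing.Theory Num.Theory.
Local Open Scope ring_scope.

Section Beta.
Variable R : realType.

(* Pisot number: algebraic integer beta > 1 (root of a monic integer
   polynomial p which is its minimal polynomial, i.e. p is irreducible over Q),
   all of whose conjugates (the other complex roots of p) have modulus < 1. *)
Definition pisot (beta : R) : Prop :=
  1 < beta /\
  exists p : {poly int},
    [/\ p \is monic,
        irreducible_poly (map_poly (intr : int -> rat) p),
        root (map_poly (intr : int -> R) p) beta &
        forall z : R[i], root (map_poly (intr : int -> R[i]) p) z ->
          z != (beta%:C)%C -> `|z| < 1].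

Definition Tbeta (beta x : R) : R := beta * x - (Num.floor (beta * x))%:~R.

(* greedy beta-expansion, 0-indexed: d k = floor(beta * T_beta^k x),
   i.e. digit d_{k+1} of the paper *)
Definition greedy (beta x : R) (k : nat) : int :=
  Num.floor (beta * iter k (Tbeta beta) x).

(* X_beta = closure (product topology on sequences over the alphabet) of the
   set of greedy expansions of points of [0,1): omega lies in the closure iff
   every cylinder (finite prefix) around omega meets that set. *)
Definition in_Xbeta (beta : R) (w : nat -> int) : Prop :=
  forall n : nat, exists x : R, 0 <= x /\ x < 1 /\
    forall k, (k < n)%N -> greedy beta x k = w k.

Definition word_in_Xbeta (beta : R) (u : seq int) : Prop :=
  exists w : nat -> int, in_Xbeta beta w /\
    forall k, (k < size u)%N -> w k = nth 0 u k.

End Beta.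

(* infinite concatenation b 0 ++ b 1 ++ b 2 ++ ... of nonempty blocks:
   its k-th symbol lies within the first k+1 blocks *)
Definition concat_stream (b : nat -> seq int) (k : nat) : int :=
  nth 0 (flatten [seq b i | i <- iota 0 k.+1]) k.

(* Main.v *)
Require Import Defs.
From HB Require Import structures.
From mathcomp Require Import all_boot all_order all_algebra all_field.
From mathcomp Require Import reals complex ring lra zify.
Set Implicit Arguments. Unset Strict Implicit. Unset Printing Implicit Defensive.
Import Order.TTheory GRing.Theory Num.Theory.
Local Open Scope ring_scope.


Section Fin.
Variable R : realType.

Lemma fin_list (s : seq int) (P : int -> R -> Prop) :
  (forall a e e', 0 < e' -> e' <= e -> P a e -> P a e') ->
  (forall a, a \in s -> exists e, 0 < e /\ P a e) ->
  exists e, 0 < e /\ forall a, a \in s -> P a e.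
Proof.
move=> mono; elim: s => [|a s IH] h; first by exists 1; split.
have [e1 [e10 h1]] := h a (mem_head _ _).
have [e2 [e20 h2]] := IH (fun b hb => h b (@mem_behead _ (a :: s) b hb)).
exists (Num.min e1 e2); split; first by rewrite lt_min e10 e20.
move=> b; rewrite in_cons => /orP[/eqP -> | hb].
  by apply: mono h1; rewrite ?lt_min ?e10 ?e20 // ge_min lexx.
by apply: mono (h2 _ hb); rewrite ?lt_min ?e10 ?e20 // ge_min lexx orbT.
Qed.

Lemma fin_gap (M : nat) n : forall (g : seq int -> R), exists e, 0 < e /\
  forall c, size c = n -> (forall a, a \in c -> `|a| <= M%:Z) -> 0 < g c -> e <= g c.
Proof.
elim: n => [|n IH] g.
  case: (ltP 0 (g [::])) => h.
    by exists (g [::]); split => // -[|] //.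
  by exists 1; split => // -[|] // _ _ /(lt_le_trans) /(_ h); rewrite ltxx.
pose s := [seq k%:Z - M%:Z | k <- iota 0 (M + M).+1].
have [e [e0 he]] := @fin_list s (fun a e => forall c', size c' = n ->
     (forall b, b \in c' -> `|b| <= M%:Z) -> 0 < g (a :: c') -> e <= g (a :: c'))
   (fun a e e' e0 ee' H c' h1 h2 h3 => le_trans ee' (H c' h1 h2 h3))
   (fun a _ => IH (fun c' => g (a :: c'))).
exists e; split => // -[|a c'] //= [hs] hb hg.
apply: (he a) => //; last by move=> b hb'; apply: hb; rewrite in_cons hb' orbT.
have ha : `|a| <= M%:Z by apply: hb; exact: mem_head.
apply/mapP; exists (absz (a + M%:Z)); first by rewrite mem_iota; lia.
lia.
Qed.
End Fin.


Lemma irr_sep (q : {poly rat}) : irreducible_poly q -> separable_poly q.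
Proof.
move=> [hs hirr]; rewrite unlock /coprimep.
have hq : q != 0 by rewrite -size_poly_gt0 ltnW.
have hd := lt_size_deriv hq.
have hd0 : q^`() != 0.
  apply/eqP => h; have := congr1 (fun r : {poly rat} => r`_(size q).-2) h.
  rewrite coef_deriv coef0 -[((size q).-2).+1]/((size q).-2.+1).
  have -> : ((size q).-2.+1 = (size q).-1)%N by move: hs; move: (size q) => k; lia.
  move/eqP; rewrite mulrn_eq0 -lead_coefE lead_coef_eq0 (negPf hq) /=.
  by move: hs; move: (size q) => k ?; apply/negP; lia.
apply/negPn/negP => hg.
have := hirr _ hg (dvdp_gcdl q q^`()) => /eqp_dvdl.
move/(_ q^`()); rewrite dvdp_gcdr => /esym hqd.
have := dvdp_leq hd0 hqd; move: hd; move: (size q) (size q^`()) => k k'; lia.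
Qed.


Fixpoint Zp (s : seq int) : {poly int} :=
  if s is a :: t then a%:P * 'X^(size t) + Zp t else 0.
Fixpoint Zf (F : pzRingType) (x : F) (s : seq int) : F :=
  if s is a :: t then a%:~R * x ^+ size t + Zf x t else 0.

Lemma Zp_eval (F : comNzRingType) (x : F) s : (map_poly intr (Zp s)).[x] = Zf x s.
Proof.
elim: s => [|a t IH] /=; first by rewrite rmorph0 horner0.
by rewrite rmorphD rmorphM /= map_polyC map_polyXn hornerD IH hornerCM hornerXn.
Qed.

Section Geo.
Variable F : numFieldType.

Lemma geo (r : F) m : 0 <= r -> r < 1 -> \sum_(i < m) r ^+ i <= (1 - r)^-1.
Proof.
move=> r0 r1; have h1 : 0 < 1 - r by rewrite subr_gt0.
elim: m => [|m IH]; first by rewrite big_ord0 invr_ge0 ltW.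
rewrite big_ord_recl expr0.
have -> : \sum_(i < m) r ^+ (bump 0 i) = r * \sum_(i < m) r ^+ i.
  by rewrite mulr_sumr; apply: eq_bigr => i _; rewrite exprS.
have : r * \sum_(i < m) r ^+ i <= r * (1 - r)^-1 by rewrite ler_wpM2l.
move=> h; apply: (le_trans (lerD (lexx 1) h)).
have -> : 1 + r * (1 - r)^-1 = (1 - r)^-1.
  by field; rewrite gt_eqF.
by [].
Qed.

Lemma Zf_bound (z b : F) s : `|z| < 1 -> 0 <= b ->
  (forall a, a \in s -> `|a%:~R : F| <= b) -> `|Zf z s| <= b / (1 - `|z|).
Proof.
move=> z1 b0 hs.
suff : `|Zf z s| <= b * \sum_(i < size s) `|z| ^+ i.
  move=> h; apply: (le_trans h); rewrite ler_wpM2l //; exact: geo.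
elim: s hs => [|a t IH] hs /=; first by rewrite normr0 big_ord0 mulr0.
rewrite big_ord_recr /= mulrDr [in X in _ <= X]addrC.
apply: (le_trans (ler_normD _ _)); apply: lerD.
  rewrite normrM normrX ler_wpM2r ?exprn_ge0 //; apply: hs; exact: mem_head.
apply: IH => c hc; apply: hs; by rewrite in_cons hc orbT.
Qed.
End Geo.

Lemma Zf_map (F G : comNzRingType) (f : {rmorphism F -> G}) x s :
  f (Zf x s) = Zf (f x) s.
Proof.
elim: s => [|a t IH] /=; first by rewrite rmorph0.
by rewrite rmorphD rmorphM rmorph_int rmorphXn IH.
Qed.


Section Comb.
Variable R : realType.
Variable beta : R.
Hypothesis b1 : 1 < beta.

Fixpoint val (s : seq int) : R :=
  if s is a :: t then (a%:~R + val t) / beta else 0.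
Fixpoint adm (s : seq int) : Prop :=
  if s is a :: t then [/\ 0 <= a, val s < 1 & adm t] else True.

Lemma b0 : 0 < beta. Proof. exact: lt_trans ltr01 b1. Qed.

Lemma val_ge0 s : adm s -> 0 <= val s.
Proof.
elim: s => [|a t IH] //= [a0 _ /IH h].
by rewrite divr_ge0 ?(ltW b0) // addr_ge0 // ler0z.
Qed.

Lemma val_lt1 s : adm s -> val s < 1.
Proof. by case: s => [|a t] //= [_ h _]. Qed.

Lemma val_cat u v : val (u ++ v) = val u + val v / beta ^+ size u.
Proof.
elim: u => [|a u IH] /=; first by rewrite expr0 divr1 add0r.
rewrite IH exprS invfM; ring.
Qed.

Lemma val_nseq0 N : val (nseq N 0) = 0.
Proof. by elim: N => //= N ->; rewrite addr0 mul0r. Qed.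

Lemma val_take s n : adm s -> val (take n s) <= val s.
Proof.
elim: s n => [|a t IH] [|n] h; rewrite /=.
- by [].
- by [].
- exact: (val_ge0 h).
case: h => _ _ h; rewrite ler_pM2r ?invr_gt0 ?b0 // lerD2l; exact: IH.
Qed.

Lemma adm_take s n : adm s -> adm (take n s).
Proof.
elim: s n => [|a t IH] [|n] //= [a0 v1 h]; split => //; last exact: IH.
apply: le_lt_trans v1; rewrite ler_pM2r ?invr_gt0 ?b0 // lerD2l.
exact: val_take.
Qed.

Lemma adm_catr u v : adm (u ++ v) -> adm v.
Proof. by elim: u => //= a u IH [_ _ /IH]. Qed.

Lemma adm_cons0 s : adm s -> adm (0 :: s).
Proof.
move=> h; split => //=; rewrite add0r ltr_pdivrMr ?b0 // mul1r.
exact: lt_trans (val_lt1 h) b1.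
Qed.

Lemma adm_nseq0 N s : adm s -> adm (nseq N 0 ++ s).
Proof. by elim: N => //= N IH /IH /adm_cons0. Qed.

Lemma greedyS x k : greedy beta x k.+1 = greedy beta (Tbeta beta x) k.
Proof. by rewrite /greedy iterSr. Qed.

Lemma Tbeta_itv x : 0 <= Tbeta beta x < 1.
Proof.
rewrite /Tbeta; have /andP[h1 h2] := floor_itv (beta * x).
rewrite intrD in h2; apply/andP; split; lra.
Qed.

Lemma Tbeta_eq x : x = ((Num.floor (beta * x))%:~R + Tbeta beta x) / beta.
Proof.
have bn : beta != 0 by rewrite gt_eqF // b0.
by rewrite /Tbeta; field.
Qed.

Lemma mkseqS (f : nat -> int) n : mkseq f n.+1 = f 0%N :: mkseq (fun i => f i.+1) n.
Proof.
apply: (@eq_from_nth _ 0); first by rewrite size_mkseq [RHS]/= size_mkseq.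
rewrite size_mkseq => i hi; rewrite nth_mkseq //.
by case: i hi => [|i] hi //=; rewrite nth_mkseq.
Qed.

Lemma greedy_adm n x : 0 <= x < 1 ->
  adm (mkseq (greedy beta x) n) /\ val (mkseq (greedy beta x) n) <= x.
Proof.
elim: n x => [|n IH] x /andP[x0 x1]; first by split; rewrite /= ?x0.
rewrite mkseqS.
have [h1 h2] := IH _ (Tbeta_itv x).
have e : mkseq (fun i => greedy beta x i.+1) n = mkseq (greedy beta (Tbeta beta x)) n.
  by apply: eq_mkseq => i; rewrite greedyS.
rewrite e.
have hv : val (greedy beta x 0 :: mkseq (greedy beta (Tbeta beta x)) n) <= x.
  rewrite /= {3}(Tbeta_eq x) ler_pM2r ?invr_gt0 ?b0 // lerD2l.
  by rewrite /greedy /= in h2 *.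
split => //; split => //; last exact: le_lt_trans hv x1.
by rewrite /greedy /= floor_ge0 mulr_ge0 // ltW // b0.
Qed.

Lemma adm_greedy s : adm s ->
  forall k, (k < size s)%N -> greedy beta (val s) k = nth 0 s k.
Proof.
elim: s => [|a t IH] //= [a0 v1 h] k hk.
have t0 := val_ge0 h; have t1 := val_lt1 h.
have bn : beta != 0 by rewrite gt_eqF // b0.
have fl : Num.floor (beta * val (a :: t)) = a.
  rewrite /= mulrC mulfVK //; apply: floor_def.
  by rewrite lerDl t0 /= intrD ltrD2l.
case: k hk => [|k] hk; first by rewrite /greedy /=; exact: fl.
rewrite greedyS.
have -> : Tbeta beta ((a%:~R + val t) / beta) = val t.
  rewrite /Tbeta; rewrite [Num.floor _]fl; field.
by []. exact: IH.
Qed.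

Lemma XP w : (forall n, adm (mkseq w n)) -> in_Xbeta beta w.
Proof.
move=> h n; exists (val (mkseq w n)); split; first exact: val_ge0.
split; first exact: val_lt1.
move=> k hk; rewrite adm_greedy ?size_mkseq // nth_mkseq //.
Qed.

Lemma word_adm u : word_in_Xbeta beta u -> adm u.
Proof.
case=> w [hw hu]; case: (hw (size u)) => x [x0 [x1 hx]].
have [h _] := greedy_adm (size u) (introT andP (conj x0 x1)).
suff <- : mkseq (greedy beta x) (size u) = u by [].
apply: (@eq_from_nth _ 0); rewrite ?size_mkseq // => k hk.
by rewrite nth_mkseq // hx // hu.
Qed.

Section Glue.
Variable c : R.
Hypothesis hc : forall u, adm u -> c <= beta ^+ size u * (1 - val u).
Variable N : nat.
Hypothesis hN : (beta ^+ N)^-1 <= c.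

Lemma glue u t : adm u -> adm t -> adm (u ++ nseq N 0 ++ t).
Proof.
elim: u => [|a u IH] hu ht; first exact: adm_nseq0.
have hu' := hu; case: hu' => [a0 v1 hu0].
split => //; last exact: IH.
rewrite -cat_cons val_cat val_cat val_nseq0 add0r.
have bp : 0 < beta := b0.
have := hc hu => /(le_trans hN).
set m := size (a :: u); set v := val (a :: u).
move=> H.
have hb : 0 < beta ^+ m by rewrite exprn_gt0.
have hbN : 0 < beta ^+ N by rewrite exprn_gt0.
have ht1 := val_lt1 ht; have ht0 := val_ge0 ht.
have H2 : val t / beta ^+ N / beta ^+ m < (beta ^+ N)^-1 / beta ^+ m.
  have K0 : 0 < (beta ^+ N)^-1 / beta ^+ m by rewrite mulr_gt0 ?invr_gt0.
  rewrite -mulrA -subr_gt0 -{1}(mul1r (beta ^- N / beta ^+ m)) -mulrBl.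
  by rewrite mulr_gt0 // subr_gt0.
have H3 : (beta ^+ N)^-1 / beta ^+ m <= 1 - v.
  by rewrite ler_pdivrMr // mulrC.
rewrite -ltrBrDl size_nseq; exact: lt_le_trans H2 H3.
Qed.


Lemma Wex xs : (forall u, u \in xs -> adm u) ->
  exists t, flatten [seq nseq N 0 ++ u | u <- xs] ++ nseq N 0 = nseq N 0 ++ t /\ adm t.
Proof.
elim: xs => [|u xs IH] h; first by exists [::]; rewrite cats0.
have [t [e ht]] := IH (fun v hv => h v (@mem_behead _ (u :: xs) v hv)).
exists (u ++ flatten [seq nseq N 0 ++ u | u <- xs] ++ nseq N 0); split.
  by rewrite /= -!catA.
rewrite e; apply: glue => //; apply: h; exact: mem_head.
Qed.

Lemma size_flat (b : nat -> seq int) : (forall i, (0 < size (b i))%N) ->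
  forall m s, (m <= size (flatten [seq b i | i <- iota s m]))%N.
Proof.
move=> hb; elim=> [|m IH] s //=.
rewrite size_cat; have := hb s; have := IH s.+1; lia.
Qed.

Lemma concat_ok (x : nat -> seq int) : (forall i, adm (x i)) -> (0 < N)%N ->
  in_Xbeta beta (concat_stream (fun i => nseq N 0 ++ x i)).
Proof.
move=> hx hN0; apply: XP => n.
set b := fun i => nseq N 0 ++ x i.
have hb : forall i, (0 < size (b i))%N by move=> i; rewrite /b size_cat size_nseq; lia.
have [t [e ht]] := Wex (xs := map x (iota 0 n)) (fun u hu => match mapP hu with ex_intro2 i _ ei => ltac:(rewrite ei; exact: hx) end).
have hW : adm (flatten [seq b i | i <- iota 0 n] ++ nseq N 0).
  have -> : flatten [seq b i | i <- iota 0 n] ++ nseq N 0 = nseq N 0 ++ t by rewrite -e -map_comp.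
  exact: adm_nseq0.
have hs := size_flat hb n 0.
suff -> : mkseq (concat_stream b) n = take n (flatten [seq b i | i <- iota 0 n] ++ nseq N 0).
  exact: adm_take.
apply: (@eq_from_nth _ 0).
  rewrite size_mkseq size_take size_cat size_nseq; case: ltnP => //; move=> hh; exfalso; move: (leq_trans hh hs); move: (size _) => S; lia.
rewrite size_mkseq => k hk; rewrite nth_mkseq // nth_take // /concat_stream.
have -> : iota 0 n = iota 0 k.+1 ++ iota k.+1 (n - k.+1).
  by rewrite -iotaD; congr iota; lia.
rewrite map_cat flatten_cat -catA nth_cat.
by have := size_flat hb k.+1 0 => h; rewrite ifT //; lia.
Qed.
End Glue.

Lemma Zf_val u : Zf beta u = beta ^+ size u * val u.
Proof.
have bn : beta != 0 by rewrite gt_eqF // b0.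
elim: u => [|a t IH] /=; first by rewrite mulr0.
by rewrite IH exprS; field.
Qed.

Lemma adm_digits u : adm u -> forall a, a \in u -> 0 <= a /\ a%:~R <= beta.
Proof.
elim: u => [|b t IH] //= [b0' v1 h] a; rewrite in_cons => /orP[/eqP -> | ha]; last exact: IH.
split => //; have t0 := val_ge0 h.
rewrite ltr_pdivrMr ?b0 // mul1r in v1; lra.
Qed.

Lemma gap : pisot beta ->
  exists c, 0 < c /\ forall u, adm u -> c <= beta ^+ size u * (1 - val u).
Proof.
case=> _ [p [pm pirr pr pz]].
pose pC := map_poly (intr : int -> R[i]) p.
have [rs hrs] := closed_field_poly_normal pC.
have lc : lead_coef pC = 1.
  rewrite lead_coef_map_inj ?rmorph0 //; last exact: intr_inj.
  by rewrite (monicP pm).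
rewrite lc scale1r in hrs.
have urs : uniq rs.
  rewrite -separable_prod_XsubC -hrs.
  have -> : pC = map_poly (ratr : rat -> R[i]) (map_poly (intr : int -> rat) p).
    rewrite -map_poly_comp; apply: eq_map_poly => z /=; by rewrite ratr_int.
  rewrite separable_map; exact: irr_sep.
set n := size rs.
have proot : forall z, z \in rs -> root pC z by move=> z; rewrite hrs root_prod_XsubC.
have pn0 : p != 0 := monic_neq0 pm.
have sp : size p = n.+1.
  have : size pC = size p by rewrite size_map_inj_poly //; exact: intr_inj.
  by rewrite hrs size_prod_XsubC => <-.
have hzlt : forall j : 'I_n, rs`_j != (beta%:C)%C -> `|rs`_j| < 1.
  move=> j hj; apply: pz => //; apply: proot; exact: mem_nth.
pose a : 'rV[R[i]]_n := \row_j rs`_j.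
pose V := Vandermonde n a.
have Vu : V \in unitmx.
  rewrite unitmxE unitfE det_Vandermonde; apply/prodf_neq0 => i _.
  apply/prodf_neq0 => j hij.
  by rewrite !mxE subr_eq0 nth_uniq // gtn_eqF.
pose W := invmx V.
pose B (j : 'I_n) : R[i] :=
  if rs`_j == (beta%:C)%C then 1 else 1 + (beta%:C)%C / (1 - `|rs`_j|).
have B0 : forall j, 0 <= B j.
  move=> j; rewrite /B; case: eqP => hj //.
  have := hzlt j (introN eqP hj) => h.
  rewrite addr_ge0 // divr_ge0 // ?ler0c ?(ltW b0) // subr_ge0 ltW //.
pose K := \sum_(i < n) \sum_(j < n) B j * `|W j i|.
have K0 : 0 <= K by apply: sumr_ge0 => i _; apply: sumr_ge0 => j _; rewrite mulr_ge0.
pose M := Num.Def.archi_bound (complex.Re K).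
have KM : K <= M%:R.
  have Kr := RRe_real (ger0_real K0).
  have ReK0 : 0 <= complex.Re K by rewrite -ler0c Kr.
  rewrite -Kr -(rmorph_nat (real_complex R)) lecR; exact: ltW (archi_boundP ReK0).
have [e [e0 he]] := fin_gap M n (fun c => \sum_(i < n) (nth 0 c i)%:~R * beta ^+ i).
exists (Num.min 1 e); split; first by rewrite lt_min ltr01 e0.
move=> u hu.
set m := size u.
have hv1 := val_lt1 hu.
have bm : 0 < beta ^+ m by rewrite exprn_gt0 // b0.
have y0 : 0 < beta ^+ m * (1 - val u) by rewrite mulr_gt0 // subr_gt0.
case: (leP 1 (beta ^+ m * (1 - val u))) => hy1.
  by apply: le_trans hy1; rewrite ge_min lexx.
apply: (le_trans (y := e)); first by rewrite ge_min lexx orbT.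
pose Q := 'X^m - Zp u.
pose r := Pdiv.CommonRing.rmodp Q p.
have hQ := Pdiv.RingMonic.rdivp_eq pm Q.
set q := Pdiv.CommonRing.rdivp Q p in hQ.
have hsr : (size r <= n)%N by have := Pdiv.CommonRing.ltn_rmodpN0 Q pn0; rewrite sp.
have reval : forall (F : comNzRingType) (x : F), root (map_poly intr p) x ->
   (map_poly intr r).[x] = x ^+ m - Zf x u.
  move=> F x hx.
  have : (map_poly (intr : int -> F) Q).[x] = x ^+ m - Zf x u.
    by rewrite rmorphB /= map_polyXn hornerD hornerN hornerXn Zp_eval.
  by rewrite {1}hQ rmorphD rmorphM /= hornerD hornerM (rootP hx) mulr0 add0r.
pose c := mkseq (fun i => r`_i) n.
have gc : \sum_(i < n) (nth 0 c i)%:~R * beta ^+ i = beta ^+ m * (1 - val u).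
  rewrite (eq_bigr (fun i : 'I_n => (map_poly intr r)`_i * beta ^+ i)); last first.
    by move=> i _; rewrite nth_mkseq // coef_map.
  rewrite -horner_coef_wide; last by rewrite size_map_inj_poly //; exact: intr_inj.
  by rewrite reval // Zf_val mulrBr mulr1.
rewrite -gc; apply: he; [by rewrite size_mkseq | | by rewrite gc].
move=> z hzz; have : exists2 i, i \in iota 0 n & z = r`_i by apply/mapP.
case=> i.
rewrite mem_iota add0n => /andP[_ hi] ->.
pose i' : 'I_n := Ordinal hi.
suff h : `|(r`_i)%:~R : R[i]| <= K.
  by rewrite -(ler_int R[i]) intr_norm; exact: le_trans h KM.
pose crow : 'rV[R[i]]_n := \row_k ((r`_k)%:~R).
pose vals := crow *m V.
have hc : crow = vals *m W by rewrite /vals /W mulmxK.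
have vj : forall j : 'I_n, vals 0 j = (map_poly intr r).[rs`_j].
  move=> j; rewrite /vals mxE (@horner_coef_wide _ n); last first.
    by rewrite size_map_inj_poly //; exact: intr_inj.
  by apply: eq_bigr => k _; rewrite !mxE coef_map.
have vb : forall j : 'I_n, `|vals 0 j| <= B j.
  move=> j; rewrite vj reval; last by apply: proot; exact: mem_nth.
  rewrite /B; case: eqP => hz.
  - rewrite hz -(Zf_map (real_complex R)) -rmorphXn -rmorphB Zf_val ger0_norm.
      rewrite -(rmorph1 (real_complex R)) lecR; rewrite mulrBr mulr1 in hy1; lra.
    rewrite ler0c; rewrite mulrBr mulr1 in y0; lra.
  - have hzl := hzlt j (introN eqP hz).
    apply: (le_trans (ler_normB _ _)); apply: lerD.
      by rewrite normrX exprn_ile1 // ltW.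
    apply: Zf_bound => //; first by rewrite ler0c ltW // b0.
    move=> d hd; have [d0 db] := adm_digits hu hd.
    rewrite -(rmorph_int (real_complex R)) ger0_norm ?ler0c ?ler0z // lecR //.
have : (r`_i)%:~R = crow 0 i' by rewrite mxE.
rewrite hc mxE => ->.
apply: (le_trans (ler_norm_sum _ _ _)).
apply: (le_trans (y := \sum_(j < n) B j * `|W j i'|)).
  by apply: ler_sum => j _; rewrite normrM ler_wpM2r.
rewrite /K [X in _ <= X](bigD1 i') //= lerDl; apply: sumr_ge0 => k _; apply: sumr_ge0 => j _.
by rewrite mulr_ge0.
Qed.

Lemma bern N : N%:R * (beta - 1) <= beta ^+ N.
Proof.
elim: N => [|N IH]; first by rewrite mul0r exprn_ge0 // ltW // b0.
have h1 : 1 <= beta ^+ N by rewrite exprn_ege1 // ltW.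
have h2 : 0 <= (beta - 1) * (beta ^+ N - 1) by apply: mulr_ge0; rewrite subr_ge0 // ltW.
rewrite exprS -natr1; nra.
Qed.
End Comb.


Theorem lemma6p1 (R : realType) (beta : R) :
  pisot beta ->
  exists N0 : nat, forall (x : nat -> seq int) (N : nat),
    (forall i, word_in_Xbeta beta (x i)) -> (N0 < N)%N ->
    in_Xbeta beta (concat_stream (fun i => nseq N 0 ++ x i)).
Proof.
move=> hp; have b1 : 1 < beta by case: hp.
have [c [c0 hc]] := gap b1 hp.
have bb : 0 < beta - 1 by rewrite subr_gt0.
have k0 : 0 <= (c * (beta - 1))^-1 by rewrite invr_ge0 ltW // mulr_gt0.
pose N0 := Num.Def.archi_bound ((c * (beta - 1))^-1).
exists N0 => x N hx hN.
apply: (concat_ok b1 hc); last 2 first.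
- by move=> i; apply: word_adm (hx i).
- by move: hN; lia.
have h1 := archi_boundP k0.
have h2 : (N0%:R : R) <= N%:R by rewrite ler_nat ltnW.
have h3 := bern b1 N.
have bN : 0 < beta ^+ N by rewrite exprn_gt0 // (lt_trans ltr01 b1).
rewrite -[X in X <= _]mul1r ler_pdivrMr //.
have h4 : (c * (beta - 1))^-1 * (beta - 1) <= beta ^+ N.
  apply: le_trans _ h3; apply: ler_wpM2r; [exact: ltW | exact: le_trans (ltW h1) h2].
have e1 : (c * (beta - 1))^-1 * (beta - 1) = c^-1.
  by field; rewrite !gt_eqF.
rewrite e1 in h4.
by rewrite -(ler_pM2l c0) mulfV ?gt_eqF in h4.
Qed.
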